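(* Let $\overline{\mathsf{M}}_s$ be a fine saturated sharp monoid, $r$ a positive integer, and let $\mathfrak X_s$, $\mathfrak X_{s_r}$, $V\subseteq V_r$, $\mathsf{PL}_r$ and $\nabla$ be as in the context. Let $\delta\in\mathbb Z^{V_r}$ be a divisor on $\mathfrak X_{s_r}$ supported on $V$, let $D\in\mathbb Z^{V_r}$ be a divisor on $\mathfrak X_{s_r}$, and let $\alpha\in\mathsf{PL}_r$ satisfy $rD=\delta+\nabla\alpha$. Then there exists $\beta\in\mathsf{PL}_r$ such that $\alpha+r\beta$ is constant on $V\subseteq V_r$.
   Context: $\mathfrak X_s$ is a finite connected graph (loops and multiple edges allowed) with vertex set $V$, each edge $e$ having a length $\ell(e)\in\overline{\mathsf{M}}_s\setminus\{0\}$. Let $\overline{\mathsf{M}}_{s_r}=\tfrac1r\overline{\mathsf{M}}_s\subseteq\overline{\mathsf{M}}_s^{\mathsf{gp}}\otimes\mathbb Q$ (an $r$-th root adjoined to every element). $\mathfrak X_{s_r}$ is the graph obtained by subdividing each edge $e$ of $\mathfrak X_s$ into a chain of exactly $r$ edges, each of length $\ell(e)/r\in\overline{\mathsf{M}}_{s_r}$; its vertex set is $V_r\supseteq V$. $\mathsf{PL}_r$ is the group of functions $\alpha\colon V_r\to\overline{\mathsf{M}}_{s_r}^{\mathsf{gp}}$ with integer slopes: for each edge of $\mathfrak X_{s_r}$ of length $\lambda$ from $u$ to $u'$ there is $k\in\mathbb Z$ (the slope) with $\alpha(u')-\alpha(u)=k\lambda$. Divisors on $\mathfrak X_{s_r}$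 are elements of $\mathbb Z^{V_r}$, and $\nabla\alpha(v)$ is the sum of the outgoing slopes of $\alpha$ along all half-edges at $v$. *)

(* Defs.v *)
From HB Require Import structures.
From mathcomp Require Import all_boot all_order all_algebra.
Set Implicit Arguments. Unset Strict Implicit. Unset Printing Implicit Defensive.
Import Order.TTheory GRing.Theory Num.Theory.
Local Open Scope ring_scope.

(** A fine saturated sharp monoid is modelled (up to isomorphism)
    as a submonoid [M] of the lattice [Z^n] ('rV[int]_n): its groupification is
    then the subgroup [gp M] of differences, and [M^gp (x) Q] embeds in [Q^n]. *)

Definition monoid_gp n (M : 'rV[int]_n -> Prop) (x : 'rV[int]_n) : Prop :=
  exists a b, M a /\ M b /\ x = a - b.

Definition is_submonoid n (M : 'rV[int]_n -> Prop) : Prop :=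
  M 0 /\ (forall x y, M x -> M y -> M (x + y)).

(* fine = finitely generated and integral (integrality is automatic in Z^n) *)
Definition is_fine n (M : 'rV[int]_n -> Prop) : Prop :=
  is_submonoid M /\
  exists gens : seq 'rV[int]_n, (forall g, g \in gens -> M g) /\
    forall x, M x -> exists c : 'I_(size gens) -> nat,
      x = \sum_(i < size gens) gens`_i *+ c i.

Definition is_saturated n (M : 'rV[int]_n -> Prop) : Prop :=
  forall x (k : nat), monoid_gp M x -> (0 < k)%N -> M (x *+ k) -> M x.

Definition is_sharp n (M : 'rV[int]_n -> Prop) : Prop :=
  forall x, M x -> M (- x) -> x = 0.

Definition fs_sharp_monoid n (M : 'rV[int]_n -> Prop) : Prop :=
  [/\ is_fine M, is_saturated M & is_sharp M].

Definition embQ n (m : 'rV[int]_n) : 'rV[rat]_n := map_mx (fun z : int => z%:~R) m.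

(* membership in M_{s_r}^gp = (1/r) M^gp, inside Q^n *)
Definition in_Mr_gp n (M : 'rV[int]_n -> Prop) (r : nat) (x : 'rV[rat]_n) : Prop :=
  exists m, monoid_gp M m /\ r%:R *: x = embQ m.

Definition graph_adj (V E : finType) (src tgt : E -> V) : rel V :=
  fun x y => [exists e, ((src e == x) && (tgt e == y)) || ((src e == y) && (tgt e == x))].

Definition graph_connected (V E : finType) (src tgt : E -> V) : Prop :=
  forall x y : V, connect (graph_adj src tgt) x y.

(** Vertices: V_r = V + E * 'I_(r-1), where [inr (e, j)] is the (j+1)-th interior
    subdivision point of edge e.  Edges: E * 'I_r, the edge [(e, i)] goes from
    the i-th to the (i+1)-th point of the chain of e (point 0 = src e,
    point r = tgt e), with length l(e)/r. *)

Definition sub_vert (V E : finType) (r : nat) : finType := (V + (E * 'I_r.-1))%type.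

Definition chain_pt (V E : finType) (src tgt : E -> V) (r : nat) (e : E) (k : nat)
  : sub_vert V E r :=
  if k is k'.+1 then
    (if (insub k' : option 'I_r.-1) is Some j then inr (e, j) else inl (tgt e))
  else inl (src e).

Definition sub_src (V E : finType) (src tgt : E -> V) (r : nat) (ed : E * 'I_r)
  : sub_vert V E r := chain_pt src tgt r ed.1 ed.2.
Definition sub_tgt (V E : finType) (src tgt : E -> V) (r : nat) (ed : E * 'I_r)
  : sub_vert V E r := chain_pt src tgt r ed.1 ed.2.+1.

Definition sub_len n (E : finType) (len : E -> 'rV[int]_n) (r : nat) (ed : E * 'I_r)
  : 'rV[rat]_n := r%:R^-1 *: embQ (len ed.1).

Definition is_PL n (M : 'rV[int]_n -> Prop) (V E : finType) (src tgt : E -> V)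
  (len : E -> 'rV[int]_n) (r : nat) (alpha : sub_vert V E r -> 'rV[rat]_n) : Prop :=
  (forall v, in_Mr_gp M r (alpha v)) /\
  forall ed : E * 'I_r, exists k : int,
    alpha (sub_tgt src tgt ed) - alpha (sub_src src tgt ed) = k%:~R *: sub_len len ed.

(* The slope of alpha along an edge of length lam (lam <> 0): the unique k with
   Delta = k * lam, read off on the first nonzero coordinate of lam. *)
Definition slope_of n (Delta lam : 'rV[rat]_n) : rat :=
  if [pick j : 'I_n | lam 0 j != 0] is Some j then Delta 0 j / lam 0 j else 0.

Definition edge_slope n (V E : finType) (src tgt : E -> V) (len : E -> 'rV[int]_n)
  (r : nat) (alpha : sub_vert V E r -> 'rV[rat]_n) (ed : E * 'I_r) : rat :=
  slope_of (alpha (sub_tgt src tgt ed) - alpha (sub_src src tgt ed)) (sub_len len ed).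

(* nabla alpha (v) = sum of outgoing slopes along all half-edges at v
   (an edge from u to u' with slope k has outgoing slope k at u, -k at u';
   a loop thus contributes k - k = 0). *)
Definition nabla n (V E : finType) (src tgt : E -> V) (len : E -> 'rV[int]_n)
  (r : nat) (alpha : sub_vert V E r -> 'rV[rat]_n) (v : sub_vert V E r) : rat :=
  \sum_(ed : E * 'I_r | sub_src src tgt ed == v) edge_slope src tgt len alpha ed
  - \sum_(ed : E * 'I_r | sub_tgt src tgt ed == v) edge_slope src tgt len alpha ed.

(* Main.v *)
Require Import Defs.
From mathcomp Require Import all_boot all_order all_algebra ring.
Import GRing.Theory Num.Theory.
Local Open Scope ring_scope.

Lemma embQB n (a b : 'rV[int]_n) : embQ (a - b) = embQ a - embQ b.
Proof. by apply/rowP => j; rewrite !mxE rmorphB. Qed.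
Lemma embQ0 n : embQ (0 : 'rV[int]_n) = 0.
Proof. by apply/rowP => j; rewrite !mxE. Qed.
Lemma embQD n (a b : 'rV[int]_n) : embQ (a + b) = embQ a + embQ b.
Proof. by apply/rowP => j; rewrite !mxE rmorphD. Qed.
Lemma embQn n (a : 'rV[int]_n) (m : nat) : embQ (a *+ m) = m%:R *: embQ a.
Proof.
elim: m => [|m IH]; first by rewrite mulr0n scale0r embQ0.
by rewrite mulrS embQD IH -{1}[embQ a]scale1r -scalerDl -natr1 addrC.
Qed.
Lemma embQz n (a : 'rV[int]_n) (t : int) : embQ (a *~ t) = t%:~R *: embQ a.
Proof.
case: t => m; first by rewrite embQn.
rewrite NegzE mulrNz -sub0r embQB embQ0 sub0r embQn mulrNz scaleNr.
by rewrite -pmulrn.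
Qed.

Section GP.
Variables (n : nat) (M : 'rV[int]_n -> Prop) (HM : is_submonoid M).
Lemma gp0 : monoid_gp M 0.
Proof. by exists 0, 0; case: HM => H0 _; rewrite subr0. Qed.
Lemma gpD x y : monoid_gp M x -> monoid_gp M y -> monoid_gp M (x + y).
Proof.
case: HM => _ HD [a [b [Ma [Mb ->]]]] [c [d [Mc [Md ->]]]].
exists (a + c), (b + d); split; [exact: HD|split; [exact: HD|]].
by rewrite opprD addrACA.
Qed.
Lemma gpN x : monoid_gp M x -> monoid_gp M (- x).
Proof. by case=> a [b [Ma [Mb ->]]]; exists b, a; rewrite opprB. Qed.
Lemma gpM x : M x -> monoid_gp M x.
Proof. by case: HM => H0 _ Mx; exists x, 0; rewrite subr0. Qed.
Lemma gpz x t : M x -> monoid_gp M (x *~ t).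
Proof.
move=> Mx; have Hn m : monoid_gp M (x *+ m).
  elim: m => [|m IH]; first by rewrite mulr0n; apply: gp0.
  by rewrite mulrS; apply: gpD => //; apply: gpM.
case: t => m; [exact: Hn| rewrite NegzE mulrNz; apply: gpN; exact: Hn].
Qed.
End GP.

Section Graph.
Variables (n : nat) (V E : finType) (src tgt : E -> V) (len : E -> 'rV[int]_n) (r' : nat).
Local Notation r := r'.+1.
Local Notation cp := (chain_pt src tgt r).

Lemma chain_last e : cp e r = inl (tgt e).
Proof. by rewrite /chain_pt insubN ?ltnn. Qed.

Lemma chain_inr e' k e j : cp e' k = inr (e, j) -> e' = e /\ k = j.+1.
Proof.
case: k => [|k] //=; case: insubP => [u _ Hu|_] // [-> <-]; by rewrite Hu.
Qed.

Lemma chain_inr_eq e (j : 'I_r') : cp e j.+1 = inr (e, j).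
Proof. by rewrite /= valK. Qed.

Variables (alpha : sub_vert V E r -> 'rV[rat]_n) (k : E * 'I_r -> int).
Hypothesis Hk : forall ed, alpha (sub_tgt src tgt ed) - alpha (sub_src src tgt ed)
   = (k ed)%:~R *: sub_len len ed.
Hypothesis Hlen : forall e, len e <> 0.

Lemma slopeE ed : edge_slope src tgt len alpha ed = (k ed)%:~R.
Proof.
rewrite /edge_slope Hk /slope_of; case: pickP => [j Hj | H0].
  by rewrite mxE mulfK.
exfalso; apply: (Hlen ed.1); apply/rowP => j; move: (H0 j).
rewrite !mxE => /negbFE /eqP /eqP; rewrite mulf_eq0 invr_eq0 pnatr_eq0 /= intr_eq0.
by move/eqP.
Qed.

Lemma nabla_inr e (j : 'I_r') :
  nabla src tgt len alpha (inr (e, j)) =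
  (k (e, Ordinal (ltn_ord j : (j.+1 < r)%N)))%:~R - (k (e, widen_ord (leqnSn r') j))%:~R.
Proof.
rewrite /nabla (eq_bigl (pred1 (e, Ordinal (ltn_ord j : (j.+1 < r)%N)))); last first.
  move=> [e' i]; rewrite /sub_src /sub_tgt /=; apply/eqP/eqP => [/chain_inr [-> Hi]|[-> ->]].
    by congr pair; apply: val_inj.
  exact: chain_inr_eq.
rewrite big_pred1_eq (eq_bigl (pred1 (e, widen_ord (leqnSn r') j))); last first.
  move=> [e' i]; rewrite /sub_tgt; apply/eqP/eqP => [/chain_inr /= [-> [Hi]]|[-> ->]].
    by congr pair; apply: val_inj.
  exact: chain_inr_eq.
by rewrite big_pred1_eq !slopeE.
Qed.

Lemma tele e : alpha (inl (tgt e)) - alpha (inl (src e)) =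
  (\sum_(i < r) k (e, i))%:~R *: (r%:R^-1 *: embQ (len e)).
Proof.
rewrite -(chain_last e) -[inl (src e)]/(cp e 0).
rewrite -(telescope_sumr (fun i => alpha (cp e i)) (leq0n r)) big_mkord.
rewrite rmorph_sum scaler_suml; apply: eq_bigr => i _; exact: (Hk (e, i)).
Qed.

Lemma sum_div e :
  (forall j : 'I_r', exists d : int,
     k (e, Ordinal (ltn_ord j : (j.+1 < r)%N)) - k (e, widen_ord (leqnSn r') j) = r%:Z * d) ->
  exists t : int, \sum_(i < r) k (e, i) = r%:Z * t.
Proof.
move=> HD; pose kn i := k (e, inord i).
have P1 : forall i, (i < r)%N -> exists q, kn i = kn 0%N + r%:Z * q.
  elim => [|i IH] Hi; first by exists 0; rewrite mulr0 addr0.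
  have [q Hq] := IH (ltnW Hi).
  have [d Hd] := HD (Ordinal (Hi : (i < r')%N)).
  exists (q + d).
  have -> : kn i.+1 = k (e, Ordinal (ltn_ord (Ordinal (Hi : (i < r')%N)) : (i.+1 < r)%N)).
    by rewrite /kn; congr (k (e, _)); apply: val_inj; rewrite /= inordK.
  have E1 : kn i = k (e, widen_ord (leqnSn r') (Ordinal (Hi : (i < r')%N))).
    by rewrite /kn; congr (k (e, _)); apply: val_inj; rewrite /= inordK // ltnW.
  by rewrite -[k (e, Ordinal _)](subrK (k (e, widen_ord (leqnSn r') (Ordinal (Hi : (i < r')%N))))) Hd -E1 Hq mulrDr; ring.
have P2 : forall m, (m <= r)%N -> exists t, \sum_(0 <= i < m) kn i = m%:Z * kn 0%N + r%:Z * t.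
  elim => [|m IH] Hm; first by exists 0; rewrite big_geq // mul0r mulr0 addr0.
  have [t Ht] := IH (ltnW Hm); have [q Hq] := P1 m Hm.
  exists (t + q); rewrite big_nat_recr //= Ht Hq -addn1 PoszD; ring.
have [t Ht] := P2 r (leqnn r).
exists (kn 0%N + t); rewrite mulrDr -Ht big_mkord; apply: eq_bigr => i _.
by rewrite /kn inord_val.
Qed.
End Graph.
Arguments nabla_inr {n V E src tgt len r' alpha k}.
Arguments tele {n V E src tgt len r' alpha k}.
Arguments sum_div {E r'} k e.
Arguments slopeE {n V E src tgt len r' alpha k}.

Theorem mainTheorem10 (n : nat) (M : 'rV[int]_n -> Prop)
  (V E : finType) (src tgt : E -> V) (len : E -> 'rV[int]_n) (r : nat)
  (delta D : sub_vert V E r -> int) (alpha : sub_vert V E r -> 'rV[rat]_n) :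
  fs_sharp_monoid M ->
  graph_connected src tgt ->
  (forall e, M (len e) /\ len e <> 0) ->
  (0 < r)%N ->
  (forall (e : E) (j : 'I_r.-1), delta (inr (e, j)) = 0) ->
  is_PL M src tgt len alpha ->
  (forall v, ((r%:Z * D v)%R)%:~R = (delta v)%:~R + nabla src tgt len alpha v) ->
  exists beta : sub_vert V E r -> 'rV[rat]_n,
    is_PL M src tgt len beta /\
    exists c : 'rV[rat]_n, forall v : V, alpha (inl v) + r%:R *: beta (inl v) = c.
Proof.
case: r delta D alpha => [|r'] delta D alpha; first by move=> _ _ _.
move=> [[HM _] _ _] Hconn Hlen _ Hdelta [Hval Hedge] HD.
have Hlen' e : len e <> 0 := (Hlen e).2.
have [k Hk] := fin_all_exists Hedge.
have Ht : forall e, exists t : int, \sum_(i < r'.+1) k (e, i) = r'.+1%:Z * t.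
  move=> e; apply: sum_div => j; exists (D (inr (e, j))).
  have := HD (inr (e, j)); rewrite Hdelta (nabla_inr Hk Hlen') add0r -rmorphB.
  by move/intr_inj.
have [t Ht'] := fin_all_exists Ht.
have Hr0 : (r'.+1%:R : rat) != 0 by rewrite pnatr_eq0.
have Hte e : alpha (inl (tgt e)) - alpha (inl (src e)) = embQ (len e *~ t e).
  rewrite (tele Hk) Ht' embQz scalerA rmorphM /= mulrAC.
  by rewrite -[(r'.+1%:Z)%:~R]/(r'.+1%:R) mulfV // mul1r.
case: (pickP (fun _ : V => true)) => [v0 _ | Hempty]; last first.
  exists (fun _ => 0); split; last by exists 0 => v; have := Hempty v.
  split; last by move=> ed; have := Hempty (src ed.1).
  by move=> v; exists 0; split; [exact: gp0 | rewrite scaler0 embQ0].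
have Hgp : forall v, exists m, monoid_gp M m /\ alpha (inl v0) - alpha (inl v) = embQ m.
  have step : forall x p, path (graph_adj src tgt) x p ->
      (exists m, monoid_gp M m /\ alpha (inl v0) - alpha (inl x) = embQ m) ->
      exists m, monoid_gp M m /\ alpha (inl v0) - alpha (inl (last x p)) = embQ m.
    move=> x p; elim: p x => [|y p IH] x /=; first by move=> _.
    move=> /andP [Hxy Hp] [m [Hm Em]].
  apply: IH Hp _; case/existsP: Hxy => e /orP [] /andP [/eqP Hs /eqP Ht0].
    exists (m - len e *~ t e); split.
      by apply: gpD => //; apply: gpN => //; apply: gpz => //; exact: (Hlen e).1.
    by rewrite embQB -Hte -Em Hs Ht0 opprB addrA subrK.
  exists (m + len e *~ t e); split.
    by apply: gpD => //; apply: gpz => //; exact: (Hlen e).1.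
  by rewrite embQD -Hte -Em Hs Ht0 addrA subrK.
  move=> v; have /connectP [p Hp ->] := Hconn v0 v.
  apply: step Hp _.
  by exists 0; split; [exact: gp0 | rewrite subrr embQ0].
pose f v := (r'.+1%:R : rat)^-1 *: (alpha (inl v0) - alpha (inl v)).
pose beta (w : sub_vert V E r'.+1) :=
  match w with inl v => f v | inr (e, _) => f (tgt e) end.
have Hcp e i : beta (chain_pt src tgt r'.+1 e i.+1) = f (tgt e).
  by rewrite /=; case: insub => [[]|].
have Hfr v : r'.+1%:R *: f v = alpha (inl v0) - alpha (inl v).
  by rewrite /f scalerA mulfV // scale1r.
exists beta; split; [split|].
- case => [v | [e j]] /=.
    by have [m [Hm Em]] := Hgp v; exists m; split; rewrite // Hfr.
  by have [m [Hm Em]] := Hgp (tgt e); exists m; split; rewrite // Hfr.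
- move=> [e [[|i] Hi]].
    exists (- t e); rewrite /sub_tgt /sub_src /= Hcp /= /f.
    rewrite /sub_len /= -scalerBr opprB addrC -[alpha (inl (src e)) - _]opprB.
    rewrite opprB addrA subrK -opprB Hte embQz scalerN !scalerA.
    by rewrite [r'.+1%:R^-1 * _]mulrC rmorphN /= mulNr scaleNr.
  exists (0 : int); rewrite /sub_tgt /sub_src /= Hcp.
  by case: insub => [j|] /=; rewrite subrr scale0r.
- by exists (alpha (inl v0)) => v /=; rewrite Hfr addrC subrK.
Qed.
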